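(* Let $f=\min\{0,X,Y,X+Y\}$. Then for all $N\ge2$, $$N+1\le\dim(W_N)\le 4N,$$ where $W_N$ is the set associated with $\mathrm{rad}(f)$ as in the context.
   Context: A tropical (Laurent) polynomial in $2$ variables is $g=\min_{1\le j\le l}\{h_j+b_{j,1}X+b_{j,2}Y\}$ with $h_j\in\mathbb{R}$ and pairwise distinct $(b_{j,1},b_{j,2})\in\mathbb{Z}^2$. A point $x\in\mathbb{R}^2$ is a tropical solution of $g$ if the minimum is attained at least twice. $V(f)$ is the set of tropical solutions of $f$ and $\mathrm{rad}(f)$ is the set of all tropical polynomials vanishing at every point of $V(f)$. Let $T_N=\{0,\dots,N-1\}^2$ and identify $\mathbb{R}^{T_N}\cong\mathbb{R}^{N^2}$ with coordinates $w(k)$, $k\in T_N$. For $g$ with all exponents in $T_N$, its linearization is $\min_j\{h_j+w(b_{j,1},b_{j,2})\}$, satisfied by $w$ if the minimum is attained at least twice. $W_N$ is the set of all $w\in\mathbb{R}^{N^2}$ satisfying the linearizations of all $g\in\mathrm{rad}(f)$ with exponents in $T_N$. $\dim(W_N)$ is the minimum of the dimensions of tropical linear prevarieties (finite unions of convex polyhedra in $\mathbb{R}^{N^2}$) containing $W_N$. *)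

(* Defs.v *)
From HB Require Import structures.
From mathcomp Require Import all_boot all_order all_algebra.
From mathcomp Require Import reals.
Set Implicit Arguments. Unset Strict Implicit. Unset Printing Implicit Defensive.
Import Order.TTheory GRing.Theory Num.Theory.
Local Open Scope ring_scope.

Section Tropical.
Variable R : realType.

Definition min_twice (vs : seq R) : Prop :=
  exists i j : nat,
    [/\ (i < size vs)%N, (j < size vs)%N, i <> j,
        nth 0 vs i = nth 0 vs j &
        forall k, (k < size vs)%N -> nth 0 vs i <= nth 0 vs k].

(* A tropical Laurent polynomial in 2 variables:
   g = min_j { h_j + b_{j,1} X + b_{j,2} Y }, stored as the list of (h_j, (b_{j,1}, b_{j,2})). *)
Definition tpoly := seq (R * (int * int)).

Definition tpoly_wf (g : tpoly) : bool := (0 < size g)%N && uniq (map snd g).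

Definition tterm (t : R * (int * int)) (x : R * R) : R :=
  t.1 + (t.2.1)%:~R * x.1 + (t.2.2)%:~R * x.2.

Definition tsol (g : tpoly) (x : R * R) : Prop := min_twice (map (tterm ^~ x) g).

Definition tvar (f : tpoly) : R * R -> Prop := tsol f.

Definition in_rad (f g : tpoly) : Prop := tpoly_wf g /\ forall x, tvar f x -> tsol g x.

Definition pt (N : nat) := 'I_N * 'I_N -> R.

(* A "linear" polynomial on R^{T_N}: min_j { h_j + w(k_j) } with k_j in T_N. *)
Definition lpoly (N : nat) := seq (R * ('I_N * 'I_N)).
Definition lpoly_wf N (g : lpoly N) : bool := (0 < size g)%N && uniq (map snd g).
Definition lsol N (g : lpoly N) (w : pt N) : Prop :=
  min_twice (map (fun t => t.1 + w t.2) g).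

(* A tropical polynomial with all exponents in T_N, seen as an element of tpoly;
   its linearization is exactly the lpoly g itself. *)
Definition embedT N (g : lpoly N) : tpoly :=
  map (fun t => (t.1, ((nat_of_ord t.2.1)%:Z, (nat_of_ord t.2.2)%:Z))) g.

Definition WN (f : tpoly) (N : nat) : pt N -> Prop :=
  fun w => forall g : lpoly N, in_rad f (embedT g) -> lsol g w.

Definition is_prevariety N (P : pt N -> Prop) : Prop :=
  exists s : seq (lpoly N),
    (forall g, g \in s -> lpoly_wf g) /\
    (forall w, P w <-> forall g, g \in s -> lsol g w).

Definition is_polyhedron N (Q : pt N -> Prop) : Prop :=
  exists (m : nat) (a : 'I_m -> pt N) (b : 'I_m -> R),
    forall w, Q w <-> forall i, \sum_(k : 'I_N * 'I_N) a i k * w k <= b i.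

(* Q contains d+1 affinely independent points, i.e. dim(aff Q) >= d *)
Definition affdim_ge N (Q : pt N -> Prop) (d : nat) : Prop :=
  exists p : 'I_d.+1 -> pt N,
    (forall i, Q (p i)) /\
    forall c : 'I_d -> R,
      (forall k, \sum_(i < d) c i * (p (lift ord0 i) k - p ord0 k) = 0) ->
      forall i, c i = 0.

(* dim S >= d for a finite union S of convex polyhedra: S contains a convex
   polyhedron of dimension >= d (the dimension of a finite union of polyhedra
   is the maximal dimension of a polyhedron contained in it). *)
Definition dim_ge N (S : pt N -> Prop) (d : nat) : Prop :=
  exists Q : pt N -> Prop,
    [/\ is_polyhedron Q, (forall w, Q w -> S w) & affdim_ge Q d].

End Tropical.

Definition f_square (R : realType) : tpoly R :=
  [:: (0, (0%Z, 0%Z)); (0, (1%Z, 0%Z)); (0, (0%Z, 1%Z)); (0, (1%Z, 1%Z))].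

(* Main.v *)
Require Import Defs.
From HB Require Import structures.
From mathcomp Require Import all_boot all_order all_algebra.
From mathcomp Require Import reals ring lra zify.
Set Implicit Arguments. Unset Strict Implicit. Unset Printing Implicit Defensive.
Import Order.TTheory GRing.Theory Num.Theory.
Local Open Scope ring_scope.

Lemma argmin_ex (R : realType) (vs : seq R) : (0 < size vs)%N ->
  exists i, (i < size vs)%N /\ forall k, (k < size vs)%N -> nth 0 vs i <= nth 0 vs k.
Proof.
elim: vs => [//|v vs IH] _.
case: vs IH => [|v' vs] IH.
  by exists 0%N; split => // -[|k] //.
have [i [Hi Hm]] := IH isT.
case: (leP v (nth 0 (v' :: vs) i)) => Hv.
  exists 0%N; split => // -[|k] //= Hk.
  exact: le_trans Hv (Hm k Hk).
exists i.+1; split => // -[|k] /= Hk; first exact: ltW.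
exact: Hm.
Qed.

Lemma mt_dom (R : realType) (lw lu : seq R) i0 :
  size lw = size lu -> (forall k, (k < size lw)%N -> nth 0 lw k <= nth 0 lu k) ->
  (i0 < size lw)%N -> (forall k, (k < size lw)%N -> nth 0 lw i0 <= nth 0 lw k) ->
  nth 0 lu i0 = nth 0 lw i0 -> min_twice lu -> min_twice lw.
Proof.
move=> Hs Hle Hi0 Hmin Heq [a [b [Ha Hb Hab Heqab Hma]]].
rewrite -Hs in Ha Hb.
have Ea : nth 0 lw a = nth 0 lw i0.
  apply/le_anti; rewrite Hmin // andbT.
  apply: le_trans (Hle _ Ha) _; rewrite -Heq; apply: Hma; by rewrite -Hs.
have Eb : nth 0 lw b = nth 0 lw i0.
  apply/le_anti; rewrite Hmin // andbT.
  apply: le_trans (Hle _ Hb) _; rewrite -Heq -Heqab; apply: Hma; by rewrite -Hs.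
exists a, b; split => //; first by rewrite Ea Eb.
by move=> k Hk; rewrite Ea; apply: Hmin.
Qed.

Lemma mt_shift (R : realType) (c : R) vs : min_twice vs -> min_twice (map (fun v => v + c) vs).
Proof.
move=> [a [b [Ha Hb Hab Heqab Hma]]]; exists a, b; rewrite size_map; split => //.
  by rewrite !(nth_map 0) // Heqab.
by move=> k Hk; rewrite !(nth_map 0) // lerD2r; apply: Hma.
Qed.

Lemma lsol_family (R : realType) N (g : lpoly R N) (w : pt R N) (p0 : 'I_N * 'I_N) :
  (forall p, exists u : pt R N, [/\ lsol g u, (forall q, w q <= u q) & u p = w p]) ->
  lsol g w.
Proof.
move=> H.
have [u0 [Hu0 _ _]] := H p0.
have Hsz : (0 < size g)%N.
  by case: Hu0 => a [b [Ha _ _ _ _]]; move: Ha; rewrite size_map; case: (size g).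
pose lw := map (fun t => t.1 + w t.2) g.
have [i0 [Hi0 Hmin]] : exists i, (i < size lw)%N /\ forall k, (k < size lw)%N -> nth 0 lw i <= nth 0 lw k.
  by apply: argmin_ex; rewrite size_map.
pose t0 := ((0:R), p0).
have [u [Hu Hle Heq]] := H (nth t0 g i0).2.
apply: (mt_dom (lu := map (fun t => t.1 + u t.2) g) (i0 := i0)) => //.
- by rewrite !size_map.
- move=> k Hk; rewrite !(nth_map t0) -?(size_map (fun t => t.1 + w t.2)) //.
  by rewrite lerD2l.
- rewrite !(nth_map t0) -?(size_map (fun t => t.1 + w t.2)) //.
  by rewrite Heq.
Qed.
Lemma fsq_terms (R : realType) (x : R*R) :
  map (fun t => tterm t x) (f_square R) = [:: 0; x.1; x.2; x.1 + x.2].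
Proof. by rewrite /f_square /tterm /= ?mul0r ?mul1r ?add0r ?addr0. Qed.

Lemma vf_axes (R : realType) (x : R*R) : tvar (f_square R) x -> x.1 = 0 \/ x.2 = 0.
Proof.
rewrite /tvar /tsol fsq_terms; case: x => a b /=.
move=> [i [j [Hi Hj Hij Heq Hm]]].
have H0 := Hm 0%N isT; have H1 := Hm 1%N isT; have H2 := Hm 2%N isT; have H3 := Hm 3%N isT.
clear Hm; move: Hi Hj Hij Heq H0 H1 H2 H3.
case: i => [|[|[|[|i]]]] //; case: j => [|[|[|[|j]]]] //= _ _ _ Heq H0 H1 H2 H3;
  (have [->|Ha] := eqVneq a 0; [by left|right]); lra.
Qed.

Lemma axes_vf (R : realType) (x : R*R) : x.1 = 0 \/ x.2 = 0 -> tvar (f_square R) x.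
Proof.
rewrite /tvar /tsol fsq_terms; case: x => a b /= [->|->].
- case: (leP 0 b) => Hb.
  + exists 0%N, 1%N; split => //=; try lra; move=> [|[|[|[|k]]]] //= _; lra.
  + exists 2%N, 3%N; split => //=; try lra; move=> [|[|[|[|k]]]] //= _; lra.
- case: (leP 0 a) => Ha.
  + exists 0%N, 2%N; split => //=; try lra; move=> [|[|[|[|k]]]] //= _; lra.
  + exists 1%N, 3%N; split => //=; try lra; move=> [|[|[|[|k]]]] //= _; lra.
Qed.

Lemma basic_WN (R : realType) N (x y c : R) : x = 0 \/ y = 0 ->
  WN (f_square R) (fun k : 'I_N * 'I_N => c + (k.1 : nat)%:R * x + (k.2 : nat)%:R * y).
Proof.
move=> Hxy g [_ Hg].
have := Hg (x, y) (@axes_vf R (x, y) Hxy); rewrite /tsol /lsol => /(mt_shift c).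
congr min_twice; rewrite /embedT -!map_comp; apply eq_map => t /=.
rewrite /tterm /= -!pmulrn; ring.
Qed.
Definition delta (R : realType) N (p : 'I_N * 'I_N) : pt R N := fun k => (k == p)%:R.
Definition lin (R : realType) N (a w : pt R N) : R := \sum_k a k * w k.

Lemma lin_delta (R : realType) N (p : 'I_N * 'I_N) (w : pt R N) :
  \sum_k (delta R p k) * w k = w p.
Proof.
rewrite (bigD1 p) //= big1 /delta ?eqxx ?mul1r ?addr0 // => k /negbTE ->.
by rewrite mul0r.
Qed.

Lemma lin_delta_c (R : realType) N (c : R) (p : 'I_N * 'I_N) (w : pt R N) :
  \sum_k c * delta R p k * w k = c * w p.
Proof. by rewrite -(lin_delta p w) mulr_sumr; apply eq_bigr => k _; rewrite mulrA. Qed.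

Lemma lin_form (R : realType) N (c0 c1 c2 : R) (p q r : 'I_N * 'I_N) (w : pt R N) :
  lin (fun k => c0 * (delta R p k + c1 * delta R q k + c2 * delta R r k)) w =
  c0 * (w p + c1 * w q + c2 * w r).
Proof.
rewrite /lin.
under eq_bigr => k _ do rewrite mulrDr mulrDr !mulrDl !mulrA.
by rewrite !big_split /= !lin_delta_c; ring.
Qed.

Lemma poly_fin (R : realType) N (T : finType) (a : T -> pt R N) (b : T -> R) :
  is_polyhedron (fun w => forall t, lin (a t) w <= b t).
Proof.
exists #|T|, (fun i => a (enum_val i)), (fun i => b (enum_val i)) => w; split => H i.
  exact: H.
by rewrite -(enum_rankK i); apply: H.
Qed.

Definition condQ N (kd : 'I_4) (p q r : 'I_N * 'I_N) : bool :=
  match val kd with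
  | 0 => [&& p.1 == q.1, (0 < p.2)%N & (0 < q.2)%N]
  | 1 => (p.2 == 0%N :> nat) && (q.2 == 0%N :> nat)
  | 2 => (p.2 == 0%N :> nat) && (0 < q.2)%N
  | _ => [&& (q.1 == (p.1).+1 :> nat), (r.1 == (p.1).+2 :> nat), (0 < p.2)%N,
            (0 < q.2)%N & (0 < r.2)%N]
  end.
Definition c1Q (R : realType) (kd : 'I_4) : R := if val kd is 3 then -2 else -1.
Definition c2Q (R : realType) (kd : 'I_4) : R := if val kd is 3 then 1 else 0.

Definition aQ (R : realType) N (t : 'I_4 * ('I_N * 'I_N) * ('I_N * 'I_N) * ('I_N * 'I_N)) : pt R N :=
  fun k => (condQ t.1.1.1 t.1.1.2 t.1.2 t.2)%:R *
    (delta R t.1.1.2 k + c1Q R t.1.1.1 * delta R t.1.2 k + c2Q R t.1.1.1 * delta R t.2 k).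

Definition QS (R : realType) N (w : pt R N) : Prop := forall t, lin (aQ R t) w <= 0.

Lemma QS_poly (R : realType) N : is_polyhedron (@QS R N).
Proof. exact: (poly_fin (fun t => aQ R t) (fun _ => 0)). Qed.

Lemma QS_iff (R : realType) N (w : pt R N) :
  QS w <-> forall kd p q r, condQ kd p q r -> w p + c1Q R kd * w q + c2Q R kd * w r <= 0.
Proof.
split.
  move=> H kd p q r Hc; have := H (kd, p, q, r); rewrite /aQ lin_form /= Hc mul1r //.
move=> H [[[kd p] q] r]; rewrite /aQ lin_form /=.
by case: (boolP (condQ kd p q r)) => Hc; [rewrite mul1r; apply: H | rewrite mul0r].
Qed.

Definition ptQ (R : realType) N (l : nat) : pt R N := fun k =>
  if (k.2 == 0%N :> nat) then - (N%:R ^+ 2) - (l == N.+1)%:R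
  else - ((k.1 : nat)%:R ^+ 2) + (l == (k.1 : nat).+1)%:R.

Lemma ptQ_in (R : realType) N l : QS (@ptQ R N l).
Proof.
apply/QS_iff => -[kd Hkd] p q r; rewrite /condQ /c1Q /c2Q /ptQ /=.
case: kd Hkd => [|[|[|[|kd]]]] // _.
- by case/and3P => /eqP -> /lt0n_neq0/negbTE -> /lt0n_neq0/negbTE ->; lra.
- by case/andP => -> ->; lra.
- case/andP => -> /lt0n_neq0/negbTE ->.
  have h1 : ((p.1 : nat)%:R : R) <= N%:R by rewrite ler_nat ltnW.
  have h1' : ((q.1 : nat)%:R : R) <= N%:R by rewrite ler_nat ltnW.
  have h2 : (0 : R) <= (q.1 : nat)%:R by [].
  have h3 : (0 : R) <= (l == (q.1 : nat).+1)%:R by [].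
  have h4 : (0 : R) <= (l == N.+1)%:R by [].
  nra.
- case/and5P => /eqP Hq /eqP Hr /lt0n_neq0/negbTE -> /lt0n_neq0/negbTE -> /lt0n_neq0/negbTE ->.
  rewrite Hq Hr !mulrSr.
  have : ((l == (p.1 : nat).+1)%:R + (l == (p.1 : nat).+3)%:R : R) <= 1.
    have hb : ~~ ((l == (p.1 : nat).+1) && (l == (p.1 : nat).+3)).
      by apply/negP => /andP[/eqP -> /eqP]; lia.
    by move: hb; case: (l == _); case: (l == _) => //= _; rewrite ?addr0 ?add0r ?ler01 ?lexx.
  have : (0 : R) <= (l == (p.1 : nat).+2)%:R by [].
  have : (0 : R) <= (l == (p.1 : nat).+1)%:R by [].
  have : (0 : R) <= (l == (p.1 : nat).+3)%:R by [].
  move=> *; nra.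
Qed.

Lemma ptQ_indep (R : realType) n : affdim_ge (@QS R n.+2) n.+3.
Proof.
exists (fun l : 'I_(n.+4) => @ptQ R n.+2 l); split; first by move=> i; apply: ptQ_in.
move=> c H i.
have o1v : ((inord 1 : 'I_n.+2) : nat) = 1%N by rewrite inordK.
case: (ltnP i n.+2) => Hi.
  have := H (Ordinal Hi, inord 1).
  under eq_bigr => l _ do rewrite /ptQ /= o1v /= /bump /= add1n eqSS addr0 (addrC (- _)) addrK.
  move=> E; rewrite (bigD1 i) //= eqxx mulr1 big1 ?addr0 // in E => l Hl.
  have -> : ((l : nat) == i) = false by apply/negbTE; rewrite (inj_eq val_inj).
  by rewrite mulr0.
have Hin : (i : nat) = n.+2 by move: (ltn_ord i); lia.
have := H (ord0, ord0).
under eq_bigr => l _ do rewrite /ptQ /= /bump /= add1n eqSS subr0 addrAC subrr add0r.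
move=> E; rewrite (bigD1 i) //= Hin eqxx mulrN1 big1 ?addr0 in E.
  by apply/eqP; rewrite -oppr_eq0 E.
move=> l Hl.
have -> : ((l : nat) == n.+2) = false by apply/negbTE/eqP => E1; move/eqP: Hl; apply; apply/val_inj; rewrite /= E1 Hin.
by rewrite oppr0 mulr0.
Qed.
Lemma conc_lem (R : realType) (a : nat -> R) M :
  (forall i, (i.+2 < M)%N -> a i + a i.+2 <= 2 * a i.+1) ->
  forall k m, (k.+1 < M)%N -> (m < M)%N ->
  a m <= a k + (m%:R - k%:R) * (a k.+1 - a k).
Proof.
move=> Hc.
have mono : forall j i, (j.+1 < M)%N -> (i <= j)%N -> a j.+1 - a j <= a i.+1 - a i.
  elim=> [|j IH] i Hj Hij; first by move: Hij; rewrite leqn0 => /eqP ->.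
  case: (ltnP i j.+1) => Hi.
    have := IH i (ltnW Hj) Hi; have := Hc j Hj; lra.
  by have -> : i = j.+1 by lia.
move=> k m Hk Hm.
have up : forall j, (k + j < M)%N -> a (k + j)%N <= a k + j%:R * (a k.+1 - a k).
  elim=> [|j IH] Hj; first by rewrite ?addn0 mul0r addr0.
  have Hj' : (k + j < M)%N by lia.
  have Hj'' : ((k + j).+1 < M)%N by lia.
  have := IH Hj'.
  have := mono (k + j)%N k Hj'' (leq_addr _ _).
  rewrite addnS -[j.+1]addn1 natrD; lra.
have down : forall j, (j <= k)%N -> a (k - j)%N <= a k - j%:R * (a k.+1 - a k).
  elim=> [|j IH] Hj; first by rewrite ?subn0 mul0r subr0.
  have := IH (ltnW Hj).
  have Hk' : (k.+1 < M)%N by [].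
  have := mono k (k - j.+1)%N Hk' (leq_subr _ _).
  have -> : (k - j)%N = (k - j.+1).+1 by lia.
  rewrite -[j.+1]addn1 natrD; lra.
case: (leqP k m) => Hkm.
  have Hmk : (k + (m - k) < M)%N by rewrite subnKC.
  have := up (m - k)%N Hmk.
  by rewrite subnKC // natrB.
have := down (k - m)%N (leq_subr _ _).
rewrite subKn ?(ltnW Hkm) // natrB ?(ltnW Hkm) //; lra.
Qed.


Lemma QS_facts (R : realType) N (w : pt R N) : QS w ->
  [/\ (forall p q : 'I_N * 'I_N, p.1 = q.1 -> (0 < p.2)%N -> (0 < q.2)%N -> w p <= w q),
      (forall p q : 'I_N * 'I_N, (p.2 : nat) = 0%N -> (q.2 : nat) = 0%N -> w p <= w q),
      (forall p q : 'I_N * 'I_N, (p.2 : nat) = 0%N -> (0 < q.2)%N -> w p <= w q) &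
      (forall p q r : 'I_N * 'I_N, (q.1 : nat) = (p.1).+1 -> (r.1 : nat) = (p.1).+2 ->
          (0 < p.2)%N -> (0 < q.2)%N -> (0 < r.2)%N -> w p + w r <= 2 * w q)].
Proof.
move/QS_iff => H; split.
- move=> p q E1 H1 H2; have := H (@Ordinal 4 0 isT) p q p.
  rewrite /condQ /c1Q /c2Q /= E1 eqxx H1 H2 /=; move=> /(_ isT); lra.
- move=> p q E1 E2; have := H (@Ordinal 4 1 isT) p q p.
  rewrite /condQ /c1Q /c2Q /= E1 E2 /=; move=> /(_ isT); lra.
- move=> p q E1 E2; have := H (@Ordinal 4 2 isT) p q p.
  rewrite /condQ /c1Q /c2Q /= E1 E2 /=; move=> /(_ isT); lra.
- move=> p q r E1 E2 H1 H2 H3; have := H (@Ordinal 4 3 isT) p q r.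
  rewrite /condQ /c1Q /c2Q /= E1 E2 !eqxx H1 H2 H3 /=; move=> /(_ isT); lra.
Qed.

Lemma QS_WN (R : realType) n (w : pt R n.+2) : QS w -> WN (f_square R) w.
Proof.
move/QS_facts => [FA FB FC FD] g Hg.
apply: (@lsol_family R n.+2 g w (ord0, ord0)) => p.
have [Hp2|Hp2] := posnP p.2.
- pose C := w (ord0, ord0).
  pose s := \sum_k `|w k - C|.
  have s0 : 0 <= s by apply: sumr_ge0 => k _.
  have wC : forall q : 'I_n.+2 * 'I_n.+2, (q.2 : nat) = 0%N -> w q = C.
    by move=> q Hq; apply/le_anti; rewrite !FB.
  exists (fun k : 'I_n.+2 * 'I_n.+2 => C + (k.1 : nat)%:R * 0 + (k.2 : nat)%:R * s); split.
  + exact: (basic_WN C (or_introl erefl) Hg).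
  + move=> q; have [Hq|Hq] := posnP q.2.
      by rewrite Hq wC // mulr0 mul0r !addr0.
    have h1 : w q - C <= s.
      apply: le_trans (ler_norm _) _.
      by rewrite /s (bigD1 q) //= lerDl; apply: sumr_ge0.
    have h2 : s <= (q.2 : nat)%:R * s.
      by rewrite ler_peMl // ler1n.
    rewrite mulr0 addr0; lra.
  + by rewrite Hp2 wC // mulr0 mul0r !addr0.
- pose o1 : 'I_n.+2 := inord 1.
  have o1v : (o1 : nat) = 1%N by rewrite inordK.
  pose a := fun m : nat => w (inord m, o1).
  pose k := minn p.1 n.
  pose d := a k.+1 - a k.
  have Hk : (k.+1 < n.+2)%N by rewrite /k; lia.
  have Hconc : forall i, (i.+2 < n.+2)%N -> a i + a i.+2 <= 2 * a i.+1.
    move=> i Hi; apply: FD => /=; rewrite ?o1v ?inordK //; lia.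
  have aw : forall q : 'I_n.+2 * 'I_n.+2, (0 < q.2)%N -> w q = a q.1.
    move=> q Hq; apply/le_anti; rewrite !FA //= ?inord_val ?o1v //.
  have wa : forall q : 'I_n.+2 * 'I_n.+2, w q <= a q.1.
    move=> q; have [Hq|Hq] := posnP q.2; last by rewrite aw.
    by apply: FC => //=; rewrite o1v.
  exists (fun q : 'I_n.+2 * 'I_n.+2 => (a k - k%:R * d) + (q.1 : nat)%:R * d + (q.2 : nat)%:R * 0); split.
  + exact: (basic_WN (a k - k%:R * d) (or_intror erefl) Hg).
  + move=> q; apply: le_trans (wa q) _.
    have := conc_lem Hconc Hk (ltn_ord q.1).
    rewrite /d mulr0 addr0; lra.
  + rewrite aw // mulr0 addr0.
    have [Hpn|Hpn] := leqP p.1 n.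
      have -> : k = p.1 by rewrite /k; lia.
      lra.
    have Ek : k = n by rewrite /k; lia.
    have Ep : (p.1 : nat) = n.+1 by move: (ltn_ord p.1); lia.
    rewrite Ep /d Ek -[n.+1]addn1 natrD.

    ring.
Qed.

Local Close Scope ring_scope.
Definition rect6 (T : eqType) N (z : 'I_N * 'I_N -> T) r r' c c' : Prop :=
  z (r, c) = z (r, c') \/ z (r, c) = z (r', c) \/ z (r, c) = z (r', c') \/
      z (r, c') = z (r', c) \/ z (r, c') = z (r', c') \/ z (r', c) = z (r', c').

Definition rhyp (T : eqType) N (z : 'I_N * 'I_N -> T) : Prop :=
  forall r r' c c', r != r' -> c != c' -> rect6 z r r' c c'.

Definition ztr (T : eqType) N (z : 'I_N * 'I_N -> T) : 'I_N * 'I_N -> T :=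
  fun ij => z (ij.2, ij.1).

Lemma rhyp_tr (T : eqType) N (z : 'I_N * 'I_N -> T) : rhyp z -> rhyp (ztr z).
Proof.
move=> H r r' c c' Hr Hc; have := H c c' r r' Hc Hr.
rewrite /rect6 /ztr /= => -[E|[E|[E|[E|[E|E]]]]];
  do 5?[try (by left; rewrite E); right]; by rewrite E.
Qed.

Definition Good (T : eqType) N (z : 'I_N * 'I_N -> T) (I J : {set 'I_N}) : Prop :=
  exists S : {set 'I_N * 'I_N}, (#|S| <= #|I| + #|J|)%N /\
    forall i j, i \in I -> j \in J -> exists2 b, b \in S & z b = z (i, j).

Lemma Good_tr (T : eqType) N (z : 'I_N * 'I_N -> T) I J : Good (ztr z) J I -> Good z I J.
Proof.
move=> [S [HS Hc]].
exists [set (b.2, b.1) | b in S]; split.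
  rewrite card_imset; first by rewrite addnC.
  by move=> -[a b] [c d] /= [-> ->].
move=> i j Hi Hj; have [b Hb Eb] := Hc j i Hj Hi.
by exists (b.2, b.1); [apply: imset_f | move: Eb; rewrite /ztr; case: b {Hb}].
Qed.

Definition rpriv (T : eqType) N (z : 'I_N * 'I_N -> T) (I J : {set 'I_N}) r (x : T) : bool :=
  [forall i in I, forall j in J, (i != r) ==> (z (i, j) != x)].

Definition rgood (T : eqType) N (z : 'I_N * 'I_N -> T) (I J : {set 'I_N}) r : bool :=
  [forall j1 in J, forall j2 in J,
     rpriv z I J r (z (r, j1)) ==> rpriv z I J r (z (r, j2)) ==> (z (r, j1) == z (r, j2))].

Lemma row_step (T : eqType) N (z : 'I_N * 'I_N -> T) (I J : {set 'I_N}) (r : 'I_N) :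
  r \in I -> rgood z I J r -> Good z (I :\ r) J -> Good z I J.
Proof.
move=> Hr Hg [S [HS Hc]].
case: (pickP [pred j0 | (j0 \in J) && rpriv z I J r (z (r, j0))]) => [j0 /andP [Hj0 Hp0]|Hn].
- exists ((r, j0) |: S); split.
    rewrite cardsU1 (cardsD1 r I) Hr; case: ((r, j0) \notin S) => /=.
      by rewrite -addnA leq_add2l.
    by rewrite add0n -addnA; apply: leq_trans HS (leq_addl _ _).
  move=> i j Hi Hj.
  case: (eqVneq i r) => [Eir|Nir].
    subst i; case: (boolP (rpriv z I J r (z (r, j)))) => Hp.
      exists (r, j0); first by rewrite setU11.
      move/forallP: Hg => /(_ j0); rewrite Hj0 /= => /forallP /(_ j); rewrite Hj /= Hp0 Hp /=.
      by move/eqP.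
    move: Hp; rewrite /rpriv => /forallPn [i' /=].
    rewrite negb_imply => /andP [Hi'I /forallPn [j' /= ]].
    rewrite negb_imply => /andP [Hj' ]; rewrite negb_imply negbK => /andP [Hne /eqP E].
    have Hi'' : i' \in I :\ r by rewrite !inE Hne.
    have [b Hb Eb] := Hc i' j' Hi'' Hj'.
    by exists b; [rewrite inE Hb orbT | rewrite Eb].
  have Hi'' : i \in I :\ r by rewrite !inE Nir.
  have [b Hb Eb] := Hc i j Hi'' Hj.
  by exists b; [rewrite inE Hb orbT | rewrite Eb].
- exists S; split.
    rewrite (cardsD1 r I) Hr /= -addnA; apply: leq_trans HS (leq_addl _ _).
  move=> i j Hi Hj.
  case: (eqVneq i r) => [Eir|Nir]; last first.
    by apply: Hc => //; rewrite !inE Nir.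
  subst i.
  have Hp : ~~ rpriv z I J r (z (r, j)) by have := Hn j; rewrite /= Hj /= => ->.
  move: Hp; rewrite /rpriv => /forallPn [i' /=].
  rewrite negb_imply => /andP [Hi'I /forallPn [j' /= ]].
  rewrite negb_imply => /andP [Hj' ]; rewrite negb_imply negbK => /andP [Hne /eqP E].
  have Hi'' : i' \in I :\ r by rewrite !inE Hne.
    have [b Hb Eb] := Hc i' j' Hi'' Hj'.
  by exists b; [ | rewrite Eb].
Qed.

Lemma rprivE (T : eqType) N (z : 'I_N * 'I_N -> T) (I J : {set 'I_N}) r x :
  rpriv z I J r x -> forall i j, i \in I -> j \in J -> i != r -> z (i, j) != x.
Proof.
move=> /forallP H i j Hi Hj Hne; have := H i; rewrite Hi /= => /forallP /(_ j).
by rewrite Hj Hne.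
Qed.

Lemma rgoodN (T : eqType) N (z : 'I_N * 'I_N -> T) (I J : {set 'I_N}) r :
  ~~ rgood z I J r -> exists j1 j2, [/\ j1 \in J, j2 \in J, rpriv z I J r (z (r, j1)),
     rpriv z I J r (z (r, j2)) & z (r, j1) != z (r, j2)].
Proof.
rewrite /rgood => /forallPn [j1 /=]; rewrite negb_imply => /andP [Hj1 /forallPn [j2 /=]].
rewrite negb_imply => /andP [Hj2]; rewrite !negb_imply => /andP [H1 /andP [H2 H3]].
by exists j1, j2.
Qed.

Lemma no_bad (T : eqType) N (z : 'I_N * 'I_N -> T) (I J : {set 'I_N}) r :
  rhyp z -> r \in I -> ~~ rgood z I J r ->
  (forall c, c \in J -> ~~ rgood (ztr z) J I c) -> False.
Proof.
move=> Hz Hr /rgoodN [j1 [j2 [Hj1 Hj2 P1 P2 N12]]] Hcol.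
have [i1 [i2 [Hi1 Hi2 Q1 Q2 M12]]] := rgoodN (Hcol j1 Hj1).
move: Q1 Q2 M12; rewrite /ztr /= => Q1 Q2 M12.
have [i [Hi Hir Qi]] : exists i, [/\ i \in I, i != r & rpriv (ztr z) J I j1 (z (i, j1))].
  case: (eqVneq i1 r) => [E1|]; last by exists i1.
  exists i2; split => //; apply/eqP => E2; move: M12; by rewrite E1 E2 eqxx.
have Nj : j1 != j2 by apply/eqP => E; move: N12; rewrite E eqxx.
have Hri : r != i by rewrite eq_sym.
have := Hz r i j1 j2 Hri Nj.
rewrite /rect6 => -[E|[E|[E|[E|[E|E]]]]].
- by move: N12; rewrite E eqxx.
- by move: (rprivE P1 Hi Hj1 Hir); rewrite E eqxx.
- by move: (rprivE P1 Hi Hj2 Hir); rewrite E eqxx.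
- by move: (rprivE P2 Hi Hj1 Hir); rewrite E eqxx.
- by move: (rprivE P2 Hi Hj2 Hir); rewrite E eqxx.
- have Nj' : j2 != j1 by rewrite eq_sym.
  have := rprivE Qi Hj2 Hi Nj'; rewrite /ztr /= E eqxx //.
Qed.

Lemma comb_main (T : eqType) N : forall n (z : 'I_N * 'I_N -> T) (I J : {set 'I_N}),
  rhyp z -> (#|I| + #|J| <= n)%N -> Good z I J.
Proof.
elim=> [|n IH] z I J Hz Hn.
  exists set0; split; first by rewrite cards0.
  move=> i j Hi; move: Hn; rewrite leqn0 addn_eq0 => /andP [/eqP/cards0_eq HI _].
  by move: Hi; rewrite HI inE.
case: (set_0Vmem I) => [->|[r Hr]].
  by exists set0; split => [|i j]; rewrite ?cards0 ?inE.
case: (boolP [exists r in I, rgood z I J r]) => [/existsP [r' /andP [Hr' Hg]]|HnI].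
  apply: (row_step Hr' Hg); apply: IH => //.
  by move: Hn; rewrite (cardsD1 r' I) Hr' /= -addnA add1n ltnS.
case: (boolP [exists c in J, rgood (ztr z) J I c]) => [/existsP [c /andP [Hc Hg]]|HnJ].
  apply: Good_tr; apply: (row_step Hc Hg); apply: IH; first exact: rhyp_tr.
  by move: Hn; rewrite (cardsD1 c J) Hc /= addnCA add1n ltnS addnC.
exfalso; apply: (@no_bad T N z I J r Hz Hr).
  by apply/negP => Hg; move/negP: HnI; apply; apply/existsP; exists r; rewrite Hr.
by move=> c Hc; apply/negP => Hg; move/negP: HnJ; apply; apply/existsP; exists c; rewrite Hc.
Qed.

Local Open Scope ring_scope.

Definition zf (R : realType) (T : Type) D (p : 'I_D.+1 -> T -> R) (e : R) (a : T) : R :=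
  p ord0 a + \sum_(l < D) e ^+ l.+1 * (p (lift ord0 l) a - p ord0 a).

Lemma generic_pt (R : realType) (T : finType) D (p : 'I_D.+1 -> T -> R) :
  exists e : R, [/\ 0 < e, e * (D.+1)%:R <= 1 &
    forall a b, zf p e a = zf p e b -> forall l, p l a = p l b].
Proof.
pose dl (l : 'I_D) a := p (lift ord0 l) a - p ord0 a.
pose P (ab : T * T) : {poly R} :=
  \sum_(l < D) (dl l ab.1 - dl l ab.2) *: 'X^(l.+1) + (p ord0 ab.1 - p ord0 ab.2)%:P.
have hP : forall ab x, (P ab).[x] = zf p x ab.1 - zf p x ab.2.
  move=> ab x; rewrite /P /zf hornerD horner_sum hornerC.
  under eq_bigr => l _ do rewrite hornerZ hornerXn.
  have -> : \sum_(l < D) (dl l ab.1 - dl l ab.2) * x ^+ l.+1 =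
     \sum_(l < D) x ^+ l.+1 * dl l ab.1 - \sum_(l < D) x ^+ l.+1 * dl l ab.2.
    by rewrite -sumrB; apply: eq_bigr => l _; ring.
  rewrite /dl; ring.
have hC : forall ab, P ab = 0 -> forall l, p l ab.1 = p l ab.2.
  move=> ab HP.
  have c0 : p ord0 ab.1 = p ord0 ab.2.
    have := congr1 (fun q : {poly R} => q`_0) HP.
    rewrite /P coefD coef_sum coefC /= coef0 big1 ?add0r => [/eqP|l _].
      by rewrite subr_eq0 => /eqP.
    by rewrite coefZ coefXn /= mulr0.
  move=> l; case: (unliftP ord0 l) => [m ->|->] //.
  have := congr1 (fun q : {poly R} => q`_(m.+1)) HP.
  rewrite /P coefD coef_sum coefC /= coef0 addr0.
  rewrite (bigD1 m) //= coefZ coefXn eqxx mulr1 big1 ?addr0.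
    by rewrite /dl c0 => /eqP; rewrite subr_eq0 => /eqP /addIr.
  move=> l' Hl'; rewrite coefZ coefXn eqSS.
  have -> : ((m : nat) == l') = false by apply/negbTE; rewrite eq_sym; exact: Hl'.
  by rewrite mulr0.
pose F := \prod_(ab | P ab != 0) P ab.
have F0 : F != 0 by apply/prodf_neq0.
pose rs := [seq ((D.+1)%:R * (k.+1)%:R)^-1 : R | k <- iota 0 (size F)].
have Hrs : uniq rs.
  rewrite map_inj_uniq ?iota_uniq // => k1 k2 /invr_inj /mulfI.
  rewrite pnatr_eq0 => /(_ isT) /eqP; rewrite eqr_nat eqSS => /eqP //.
have : ~~ all (root F) rs.
  apply/negP => Hall; have := max_poly_roots F0 Hall Hrs.
  by rewrite size_map size_iota ltnn.
case/allPn => e /mapP [k Hk ->] HF.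
exists ((D.+1)%:R * (k.+1)%:R)^-1; split.
- by rewrite invr_gt0 mulr_gt0 // ltr0n.
- rewrite invfM mulrAC mulVf ?pnatr_eq0 // mul1r invf_le1 ?ltr0n // ler1n //.
- move=> a b Hab l; apply: (hC (a, b)) => //.
  apply/eqP; apply: contraNT HF => HP.
  rewrite /root /F horner_prod; apply/prodf_eq0; exists (a, b) => //.
  by rewrite hP /= Hab subrr.
Qed.

Lemma poly_convex (R : realType) N (Q : pt R N -> Prop) D (p : 'I_D.+1 -> pt R N) (e : R) :
  is_polyhedron Q -> (forall l, Q (p l)) -> 0 < e -> e * (D.+1)%:R <= 1 -> Q (zf p e).
Proof.
move=> [m [A [B HQ]]] Hp He HeD; apply: (proj2 (HQ (zf p e))) => i.
pose s l := \sum_k A i k * p l k.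
have Hs : forall l, s l <= B i by move=> l; exact: (proj1 (HQ (p l)) (Hp l) i).
have -> : \sum_k A i k * zf p e k = s ord0 + \sum_(l < D) e ^+ l.+1 * (s (lift ord0 l) - s ord0).
  rewrite /zf /s; under eq_bigr => k _ do rewrite mulrDr mulr_sumr.
  rewrite big_split /= exchange_big /=; congr (_ + _); apply: eq_bigr => l _.
  rewrite -sumrB mulr_sumr; apply: eq_bigr => k _; ring.
pose E := \sum_(l < D) e ^+ l.+1.
have HE : E <= 1.
  apply: le_trans (_ : \sum_(l < D) e <= 1).
    apply: ler_sum => l _; rewrite exprS -[X in _ <= X]mulr1; apply: ler_wpM2l; first exact: ltW.
    apply: exprn_ile1; first exact: ltW.
    have h1 : (1 : R) <= D.+1%:R by rewrite ler1n.
    nra.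
  rewrite sumr_const card_ord -mulr_natr; apply: le_trans HeD.
  by rewrite ler_pM2l // ler_nat.
have HE0 : 0 <= E by apply: sumr_ge0 => l _; rewrite exprn_ge0 ?ltW.
have : \sum_(l < D) e ^+ l.+1 * (s (lift ord0 l) - s ord0) <= E * (B i - s ord0).
  rewrite /E mulr_suml; apply: ler_sum => l _; apply: ler_wpM2l.
    by rewrite exprn_ge0 ?ltW.
  by rewrite lerD2r.
have := Hs ord0; nra.
Qed.

Definition rect (R : realType) N (p q : 'I_N * 'I_N) : lpoly R N :=
  [:: (0, p); (0, (p.1, q.2)); (0, (q.1, p.2)); (0, q)].

Definition Prect (R : realType) N (w : pt R N) : Prop :=
  forall p q : 'I_N * 'I_N, (p.1 < q.1)%N -> (p.2 < q.2)%N -> lsol (rect R p q) w.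

Lemma rect_uniq N (p q : 'I_N * 'I_N) : (p.1 < q.1)%N -> (p.2 < q.2)%N ->
  uniq [:: p; (p.1, q.2); (q.1, p.2); q].
Proof.
case: p q => [r c] [r' c'] /= H1 H2.
have n1 : (r == r') = false by apply/negbTE; rewrite -val_eqE /= neq_ltn H1.
have n2 : (c == c') = false by apply/negbTE; rewrite -val_eqE /= neq_ltn H2.
have n1' : (r' == r) = false by rewrite eq_sym.
have n2' : (c' == c) = false by rewrite eq_sym.
rewrite /= !inE !xpair_eqE n1 n2 ?n1' ?n2' !eqxx /= ?andbF ?andbT //.
Qed.

Lemma Prect_prev (R : realType) N : is_prevariety (@Prect R N).
Proof.
pose s := [seq rect R pq.1 pq.2 | pq <- enum [pred pq : ('I_N * 'I_N) * ('I_N * 'I_N) |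
              (pq.1.1 < pq.2.1)%N && (pq.1.2 < pq.2.2)%N]].
exists s; split.
  move=> g /mapP [[p q]]; rewrite mem_enum inE /= => /andP [H1 H2] ->.
  by rewrite /lpoly_wf /rect /=; apply: rect_uniq.
move=> w; split.
  by move=> H g /mapP [[p q]]; rewrite mem_enum inE /= => /andP [H1 H2] ->; apply: H.
move=> H p q H1 H2; apply: H; apply/mapP; exists (p, q) => //.
by rewrite mem_enum inE /= H1 H2.
Qed.

Lemma WN_Prect (R : realType) N (w : pt R N) : WN (f_square R) w -> Prect w.
Proof.
move=> Hw p q H1 H2; apply: Hw; split.
  rewrite /tpoly_wf /embedT /=.
  have := rect_uniq H1 H2.
  case: p q H1 H2 => [r c] [r' c'] /= _ _.
  by rewrite !inE !xpair_eqE !eqz_nat.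
move=> x /vf_axes; rewrite /tsol /embedT /= /tterm /= !add0r.
case: x => a b /= [->|->]; rewrite ?mulr0 ?add0r ?addr0.
- set u := (_ * b); set v := (_ * b).
  case: (leP u v) => Huv.
  + exists 0%N, 2%N; split => //=; move=> [|[|[|[|k]]]] //= _; lra.
  + exists 1%N, 3%N; split => //=; move=> [|[|[|[|k]]]] //= _; lra.
- set u := (_ * a); set v := (_ * a).
  case: (leP u v) => Huv.
  + exists 0%N, 1%N; split => //=; move=> [|[|[|[|k]]]] //= _; lra.
  + exists 2%N, 3%N; split => //=; move=> [|[|[|[|k]]]] //= _; lra.
Qed.

Lemma rect6_swapr (T : eqType) N (z : 'I_N * 'I_N -> T) r r' c c' :
  rect6 z r r' c c' -> rect6 z r' r c c'.
Proof.
rewrite /rect6 => -[E|[E|[E|[E|[E|E]]]]];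
  do 5?[try (by left; rewrite E); right]; by rewrite E.
Qed.

Lemma rect6_swapc (T : eqType) N (z : 'I_N * 'I_N -> T) r r' c c' :
  rect6 z r r' c c' -> rect6 z r r' c' c.
Proof.
rewrite /rect6 => -[E|[E|[E|[E|[E|E]]]]];
  do 5?[try (by left; rewrite E); right]; by rewrite E.
Qed.

Lemma Prect_rhyp (R : realType) N (w : pt R N) : Prect w -> rhyp w.
Proof.
move=> H.
have H0 : forall r r' c c' : 'I_N, (r < r')%N -> (c < c')%N -> rect6 w r r' c c'.
  move=> r r' c c' Hr Hc; have := H (r, c) (r', c') Hr Hc.
  rewrite /lsol /rect /= => -[i [j [Hi Hj Hij Heq _]]].
  move: Hi Hj Hij Heq; rewrite /rect6.
  case: i => [|[|[|[|i]]]] //; case: j => [|[|[|[|j]]]] //= _ _ _; rewrite !add0r => E;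
    do 5?[try (by left; rewrite E); right]; by rewrite E.
move=> r r' c c' Hr Hc.
case: (ltngtP r r') => Hrr; last by move/val_inj: Hrr => E; move: Hr; rewrite E eqxx.
- case: (ltngtP c c') => Hcc; last by move/val_inj: Hcc => E; move: Hc; rewrite E eqxx.
  + exact: H0.
  + exact/rect6_swapc/H0.
- case: (ltngtP c c') => Hcc; last by move/val_inj: Hcc => E; move: Hc; rewrite E eqxx.
  + exact/rect6_swapr/H0.
  + exact/rect6_swapr/rect6_swapc/H0.
Qed.

Lemma ker_nz (R : fieldType) D K (Cm : 'M[R]_(D, K)) : (K < D)%N ->
  exists2 c : 'rV_D, c != 0 & c *m Cm = 0.
Proof.
move=> HKD.
have Hr : \rank (kermx Cm) != 0%N.
  by rewrite mxrank_ker subn_eq0 -ltnNge; apply: leq_ltn_trans (rank_leq_col Cm) _.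
case: (boolP [exists i, row i (kermx Cm) != 0]) => [/existsP [i Hi]|Hn].
  by exists (row i (kermx Cm)) => //; rewrite -row_mul mulmx_ker row0.
exfalso; move/negP: Hr; apply; apply/eqP.
have -> : kermx Cm = 0 by apply/row_matrixP => i; rewrite row0;
  apply/eqP; apply: contraNT Hn => Hi; apply/existsP; exists i.
exact: mxrank0.
Qed.

Lemma ub_dim (R : realType) N D : (N + N < D)%N -> ~ dim_ge (@Prect R N) D.
Proof.
move=> HD [Q [HQ HQP [p [Hp Hind]]]].
have [e [He HeD Hz]] := generic_pt (T := ('I_N * 'I_N)%type) p.
have Qz : Q (zf p e) := poly_convex HQ Hp He HeD.
have Hrh : rhyp (zf p e) := Prect_rhyp (HQP _ Qz).
have [S [HS Hcov]] := @comb_main _ N _ (zf p e) setT setT Hrh (leqnn _).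
rewrite cardsT card_ord in HS.
pose Cm : 'M[R]_(D, #|S|) := \matrix_(l, k) (p (lift ord0 l) (enum_val k) - p ord0 (enum_val k)).
have [c Hc0 Hc] := ker_nz Cm (leq_ltn_trans HS HD).
have Hall : forall k, \sum_(l < D) c 0 l * (p (lift ord0 l) k - p ord0 k) = 0.
  move=> [a1 a2]; have [b Hb Eb] := Hcov a1 a2 (in_setT _) (in_setT _).
  have Epb := Hz _ _ Eb.
  have := congr1 (fun M : 'rV_#|S| => M 0 (enum_rank_in Hb b)) Hc.
  rewrite !mxE /= => E; rewrite -[RHS]E; apply: eq_bigr => l _.
  by rewrite /Cm mxE enum_rankK_in // !Epb.
apply/negP: Hc0; rewrite negbK; apply/eqP/matrixP => i j.
by rewrite (ord1 i) mxE; apply: Hind.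
Qed.

Theorem mainTheorem4 (R : realType) (N : nat) : (2 <= N)%N ->
  (forall P : pt R N -> Prop,
      is_prevariety P -> (forall w, WN (f_square R) w -> P w) ->
      dim_ge P N.+1) /\
  (exists P : pt R N -> Prop,
      [/\ is_prevariety P, (forall w, WN (f_square R) w -> P w) &
          ~ dim_ge P (4 * N).+1]).
Proof.
case: N => [|[|n]] // _; split.
- move=> P _ HWP; exists (@QS R n.+2); split.
  + exact: QS_poly.
  + by move=> w /QS_WN /HWP.
  + exact: ptQ_indep.
- exists (@Prect R n.+2); split.
  + exact: Prect_prev.
  + exact: WN_Prect.
  + apply: ub_dim; lia.
Qed.
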